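(* Consider a power allocation game among countries $\mathbf{n}=\{1,\dots,n\}$ on a simple undirected signed graph, with friend sets $\mathcal{F}_i$ (with $i\in\mathcal{F}_i$), adversary sets $\mathcal{A}_i$ ($\mathcal{F}_i\cap\mathcal{A}_i=\emptyset$) and total powers $p_i\ge 0$. Then for every strategy matrix $U=[u_{ij}]\in\mathcal{U}$ there exists a country $i\in\mathbf{n}$ with $x_i(U)\in\{\text{safe},\text{precarious}\}$, i.e. with $\sum_{j\in\mathcal{F}_i}u_{ji}+\sum_{j\in\mathcal{A}_i}u_{ij}\ \ge\ \sum_{j\in\mathcal{A}_i}u_{ji}$. (This holds for every strategy matrix, whether or not it is an equilibrium.)
   Context: Power allocation game (PAG): $n$ countries are the vertices of a simple undirected signed graph; an edge $(i,j)$ labelled $+$ means $i,j$ are friends, labelled $-$ means adversaries. For each $i$, $\mathcal{F}_i$ is the set of friends of $i$, with the convention $i\in\mathcal{F}_i$, and $\mathcal{A}_i$ the set of adversaries; these are disjoint. Country $i$ has total power $p_i\ge 0$. A strategy matrix is a nonnegative $n\times n$ matrix $U=[u_{ij}]$ with $\sum_{j}u_{ij}=p_i$ for each $i$ and $u_{ij}=0$ whenever $j\notin\mathcal{F}_i\cup\mathcal{A}_i$; $\mathcal{U}$ is the set of all strategy matrices. The total support of $i$ is $\sigma_i(U)=\sum_{j\in\mathcal{F}_i}u_{ji}+\sum_{j\in\mathcal{A}_i}u_{ij}$ and the total threat is $\tau_i(U)=\sum_{j\in\mathcal{A}_i}u_{ji}$. The state $x_i(U)$ is safe if $\sigma_i(U)>\tau_i(U)$,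 precarious if $\sigma_i(U)=\tau_i(U)$, unsafe if $\sigma_i(U)<\tau_i(U)$. *)

(* Defs.v *)
From mathcomp Require Import all_boot all_order all_algebra.
Set Implicit Arguments. Unset Strict Implicit. Unset Printing Implicit Defensive.
Import Order.TTheory GRing.Theory Num.Theory.
Local Open Scope ring_scope.

Definition signed_graph (n : nat) (F A : rel 'I_n) : Prop :=
  [/\ reflexive F, symmetric F, irreflexive A, symmetric A
    & forall i j, ~~ (F i j && A i j)].

Definition strategy_matrix (R : realFieldType) (n : nat) (F A : rel 'I_n)
    (p : 'I_n -> R) (U : 'M[R]_n) : Prop :=
  [/\ forall i j, 0 <= U i j,
      forall i, \sum_(j < n) U i j = p i
    & forall i j, ~~ F i j -> ~~ A i j -> U i j = 0].

Definition support (R : realFieldType) (n : nat) (F A : rel 'I_n)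
    (U : 'M[R]_n) (i : 'I_n) : R :=
  \sum_(j < n | F i j) U j i + \sum_(j < n | A i j) U i j.

Definition threat (R : realFieldType) (n : nat) (A : rel 'I_n)
    (U : 'M[R]_n) (i : 'I_n) : R :=
  \sum_(j < n | A i j) U j i.

Inductive state := Safe | Precarious | Unsafe.

Definition x_state (R : realFieldType) (n : nat) (F A : rel 'I_n)
    (U : 'M[R]_n) (i : 'I_n) : state :=
  if threat A U i < support F A U i then Safe
  else if support F A U i == threat A U i then Precarious
  else Unsafe.

(* Main.v *)
Require Import Defs.
From mathcomp Require Import all_boot all_order all_algebra.
Import Order.TTheory GRing.Theory Num.Theory.
Local Open Scope ring_scope.

Theorem lemma1 (R : realFieldType) (n : nat) (F A : rel 'I_n) (p : 'I_n -> R)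
    (U : 'M[R]_n) :
  (0 < n)%N ->
  signed_graph F A ->
  (forall i, 0 <= p i) ->
  strategy_matrix F A p U ->
  exists i : 'I_n, x_state F A U i = Safe \/ x_state F A U i = Precarious.
Proof.
move=> n0 [_ _ _ Asym _] _ [U0 _ _].
have key : exists i, threat A U i <= Defs.support F A U i.
  case: (boolP [exists i, threat A U i <= Defs.support F A U i]) => [/existsP //|].
  rewrite negb_exists => /forallP H; exfalso.
  have Hlt : forall i, Defs.support F A U i < threat A U i.
    by move=> i; have := H i; rewrite -ltNge.
  have := @ltr_sum R _ (index_enum 'I_n) xpredT (Defs.support F A U) (threat A U).
  move=> /(_ _ (fun i _ => Hlt i)).
  have -> : has xpredT (index_enum 'I_n).
    by apply/hasP; exists (Ordinal n0) => //; rewrite mem_index_enum.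
  move=> /(_ isT).
  rewrite /Defs.support /threat big_split /=.
  have -> : \sum_(i < n) \sum_(j < n | A i j) U j i
          = \sum_(i < n) \sum_(j < n | A i j) U i j.
    rewrite (exchange_big_dep xpredT) //=.
    by apply: eq_bigr => i _; apply: eq_bigl => j; rewrite Asym.
  rewrite -{2}[\sum_(i < n) \sum_(j < n | A i j) U i j]add0r ltrD2r.
  rewrite ltNge => /negP; apply.
  by apply: sumr_ge0 => i _; apply: sumr_ge0 => j _; apply: U0.
case: key => i Hi; exists i; rewrite /x_state.
move: Hi; rewrite le_eqVlt => /orP [/eqP ->|->]; last by left.
by right; rewrite ltxx eqxx.
Qed.
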